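(* In the situation of Lemma 7.1 (i.e. $X$ periodic, $e\in E(X)$, $Z_n=\{z\in Z(X):z^n\in H_e\}$, and $Z_\ell\setminus H_e$ infinite for some $\ell\in\mathbb N$), one can find a set $F'\subseteq X$ with at most two elements and an infinite set $A'\subseteq Z_\ell$ such that $A'A'\subseteq F'\cup H_e$ and $A'\cap F'X^1=\emptyset$.
   Context: Periodic: every element has an idempotent power. $E(X)$: idempotents; $H_e$: maximal subgroup containing $e$; $Z(X)$: center. $X^1=X\cup\{1\}$ with adjoined identity, $F'X^1=\{fx:f\in F',x\in X^1\}$, $A'A'=\{ab:a,b\in A'\}$. *)

(* Defs.v *)
From Stdlib Require Import Arith List.

Section SemigroupDefs.
Variable T : Type.
Variable mul : T -> T -> T.

(* spow x n = x^(n+1)  (semigroups have no x^0) *)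
Fixpoint spow (x : T) (n : nat) : T :=
  match n with
  | 0 => x
  | S m => mul x (spow x m)
  end.

Definition pw (x : T) (n : nat) : T := spow x (n - 1).

Definition idempotent (x : T) : Prop := mul x x = x.

Definition periodic : Prop :=
  forall x : T, exists n : nat, 1 <= n /\ idempotent (pw x n).

Definition center (z : T) : Prop := forall x : T, mul z x = mul x z.

(* H_e: the maximal subgroup containing the idempotent e, i.e. the group of
   units of the monoid eXe (equivalently the H-class of e). *)
Definition Hgrp (e x : T) : Prop :=
  mul e x = x /\ mul x e = x /\
  exists y : T, mul e y = y /\ mul y e = y /\ mul x y = e /\ mul y x = e.

Definition Zn (e : T) (n : nat) (z : T) : Prop := center z /\ Hgrp e (pw z n).

Definition finite_set (A : T -> Prop) : Prop :=
  exists l : list T, forall x, A x -> In x l.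
Definition infinite_set (A : T -> Prop) : Prop := ~ finite_set A.

(* F'X^1 = { f x : f in F', x in X^1 } *)
Definition FX1 (F : T -> Prop) (y : T) : Prop :=
  F y \/ exists f x, F f /\ y = mul f x.

End SemigroupDefs.
Arguments spow {T}. Arguments pw {T}. Arguments idempotent {T}. Arguments periodic {T}. Arguments center {T}. Arguments Hgrp {T}. Arguments Zn {T}. Arguments finite_set {T}. Arguments infinite_set {T}. Arguments FX1 {T}.

(* Main.v *)
Require Import Defs.
From Stdlib Require Import Arith List Lia Classical ClassicalEpsilon.

Lemma inf_nonempty {T} (C : T -> Prop) : infinite_set C -> exists c, C c.
Proof. intros H. apply NNPP; intro N. apply H. exists nil. intros x Hx. exfalso; apply N; eauto. Qed.

Lemma inf_mono {T} (C D : T -> Prop) : infinite_set C -> (forall x, C x -> D x) -> infinite_set D.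
Proof. intros H HCD [L HL]. apply H. exists L. auto. Qed.

Lemma inf_remove {T} (C : T -> Prop) b : infinite_set C -> infinite_set (fun x => C x /\ x <> b).
Proof.
  intros H [L HL]. apply H. exists (b :: L). intros x Hx.
  destruct (classic (x = b)). left; auto. right; apply HL; auto.
Qed.

Lemma pigeon {T U} (C : T -> Prop) (g : T -> U) L : infinite_set C ->
  (forall c, C c -> In (g c) L) -> exists y, infinite_set (fun c => C c /\ g c = y).
Proof.
  revert C. induction L as [|a L IH]; intros C H HL.
  - exfalso. destruct (inf_nonempty _ H) as [c Hc]. exact (HL c Hc).
  - destruct (classic (infinite_set (fun c => C c /\ g c = a))) as [Ha|Ha]. eauto.
    unfold infinite_set in Ha; apply NNPP in Ha. destruct Ha as [La HLa].
    destruct (IH (fun c => C c /\ g c <> a)) as [y Hy].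
    + intros [M HM]. apply H. exists (La ++ M). intros x Hx. apply in_or_app.
      destruct (classic (g x = a)); [left; apply HLa; auto | right; apply HM; auto].
    + intros c [Hc Hne]. destruct (HL c Hc) as [E|E]; [congruence|auto].
    + exists y. eapply inf_mono; [exact Hy|]. simpl; tauto.
Qed.

Lemma inj_image {I T} (b : I -> T) (S : I -> Prop) : (forall i j, b i = b j -> i = j) ->
  infinite_set S -> infinite_set (fun a => exists i, S i /\ a = b i).
Proof.
  intros Hinj H [L HL]. revert S H HL. induction L as [|a L IH]; intros S H HL.
  - destruct (inf_nonempty _ H) as [i Hi]. destruct (HL (b i) (ex_intro _ i (conj Hi eq_refl))).
  - apply (IH (fun i => S i /\ b i <> a)).
    + intros [M HM]. apply H. destruct (classic (exists i0, b i0 = a)) as [[i0 Hi0]|Hn].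
      * exists (i0 :: M). intros i Hi. destruct (classic (b i = a)).
        left. apply Hinj; congruence. right; apply HM; auto.
      * exists M. intros i Hi. apply HM. split; auto. intro E; apply Hn; eauto.
    + intros x [i [[Hi Hne] ->]].
      destruct (HL (b i) (ex_intro _ i (conj Hi eq_refl))) as [E|E]; [congruence|auto].
Qed.

Lemma nat_inf : infinite_set (fun _ : nat => True).
Proof.
  intros [L HL].
  assert (forall L : list nat, exists n, forall x, In x L -> x < n) as Hb.
  { induction L0 as [|a L0 [n Hn]]. exists 0; intros x []. exists (S a + n).
    intros x [<-|Hx]. lia. specialize (Hn x Hx). lia. }
  destruct (Hb L) as [n Hn]. specialize (Hn n (HL n I)). lia.
Qed.

Lemma inf_unbounded (S : nat -> Prop) : infinite_set S -> forall N, exists j, S j /\ N <= j.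
Proof.
  intros H N. apply NNPP; intro Hn. apply H. exists (seq 0 N). intros x Hx. apply in_seq.
  split; [lia|]. destruct (le_lt_dec N x); [exfalso; apply Hn; eauto| lia].
Qed.

Definition ef {T} (mul : T -> T -> T) e x := mul e x = x.

Lemma spow_add {T} (mul : T->T->T) (mulA : forall x y z, mul x (mul y z) = mul (mul x y) z) x a b :
  spow mul x (S (a + b)) = mul (spow mul x a) (spow mul x b).
Proof.
  induction a as [|a IH]. reflexivity.
  change (spow mul x (S (S a + b))) with (mul x (spow mul x (S (a + b)))).
  rewrite IH, mulA. reflexivity.
Qed.

Lemma center_mul {T} (mul : T->T->T) (mulA : forall x y z, mul x (mul y z) = mul (mul x y) z) x y :
  center mul x -> center mul y -> center mul (mul x y).
Proof.
  intros Hx Hy z. unfold center in *.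
  rewrite <- (mulA x y z). rewrite (Hy z). rewrite (mulA x z y). rewrite (Hx z).
  rewrite <- (mulA z x y). reflexivity.
Qed.

Lemma center_spow {T} (mul : T->T->T) (mulA : forall x y z, mul x (mul y z) = mul (mul x y) z) x n :
  center mul x -> center mul (spow mul x n).
Proof. intros H. induction n; simpl; auto using center_mul. Qed.

Lemma rearr {T} (mul : T->T->T) (mulA : forall x y z, mul x (mul y z) = mul (mul x y) z) a b c d :
  mul b c = mul c b -> mul (mul a b) (mul c d) = mul (mul a c) (mul b d).
Proof.
  intros H. rewrite <- (mulA a b (mul c d)). rewrite (mulA b c d). rewrite H.
  rewrite <- (mulA c b d). rewrite (mulA a c (mul b d)). reflexivity.
Qed.

Lemma spow_mul_c {T} (mul : T->T->T) (mulA : forall x y z, mul x (mul y z) = mul (mul x y) z) c x n :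
  center mul c -> spow mul (mul c x) n = mul (spow mul c n) (spow mul x n).
Proof.
  intros Hc. induction n as [|n IH]. reflexivity.
  change (mul (mul c x) (spow mul (mul c x) n) = mul (mul c (spow mul c n)) (mul x (spow mul x n))).
  rewrite IH. apply rearr; auto. symmetry. apply (center_spow mul mulA c n Hc).
Qed.

Lemma spow_sq {T} (mul : T->T->T) (mulA : forall x y z, mul x (mul y z) = mul (mul x y) z) c m :
  center mul c -> spow mul (mul c c) m = spow mul c (S (m + m)).
Proof. intros Hc. rewrite spow_mul_c, spow_add; auto. Qed.

Lemma ef_mul_l {T} (mul : T->T->T) (mulA : forall x y z, mul x (mul y z) = mul (mul x y) z) e x y :
  ef mul e x -> ef mul e (mul x y).
Proof. unfold ef; intros H. rewrite mulA, H. reflexivity. Qed.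

Lemma ef_spow_mono {T} (mul : T->T->T) (mulA : forall x y z, mul x (mul y z) = mul (mul x y) z) e c n m :
  ef mul e (spow mul c n) -> n <= m -> ef mul e (spow mul c m).
Proof.
  intros H Hle. destruct (Nat.eq_dec n m) as [->|]; auto.
  replace m with (S (n + (m - n - 1))) by lia. rewrite spow_add by auto. apply ef_mul_l; auto.
Qed.

Lemma ef_spow_of {T} (mul : T->T->T) (mulA : forall x y z, mul x (mul y z) = mul (mul x y) z) e c n :
  ef mul e c -> ef mul e (spow mul c n).
Proof. intros H. destruct n; [exact H|]. exact (ef_mul_l mul mulA e c _ H). Qed.

Lemma H_mul {T} (mul : T->T->T) (mulA : forall x y z, mul x (mul y z) = mul (mul x y) z) e
  (he : idempotent mul e) x x' : Hgrp mul e x -> Hgrp mul e x' -> Hgrp mul e (mul x x').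
Proof.
  intros [h1 [h2 [y [y1 [y2 [y3 y4]]]]]] [h1' [h2' [y' [y1' [y2' [y3' y4']]]]]].
  split; [rewrite mulA, h1; reflexivity|]. split; [rewrite <- mulA, h2'; reflexivity|].
  exists (mul y' y). split; [rewrite mulA, y1'; reflexivity|]. split; [rewrite <- mulA, y2; reflexivity|].
  split.
  - rewrite <- (mulA x x' (mul y' y)), (mulA x' y' y), y3', y1, y3. reflexivity.
  - rewrite <- (mulA y' y (mul x x')), (mulA y x x'), y4, h1', y4'. reflexivity.
Qed.

Lemma Zn_mul {T} (mul : T->T->T) (mulA : forall x y z, mul x (mul y z) = mul (mul x y) z) e
  (he : idempotent mul e) l z w : Zn mul e l z -> Zn mul e l w -> Zn mul e l (mul z w).
Proof.
  intros [Hz Gz] [Hw Gw]. split. apply center_mul; auto.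
  unfold pw in *. rewrite spow_mul_c by auto. apply H_mul; auto.
Qed.

Lemma EH {T} (mul : T->T->T) (mulA : forall x y z, mul x (mul y z) = mul (mul x y) z) e
  (he : idempotent mul e) l (hl : 1 <= l) z : Zn mul e l z -> ef mul e z -> Hgrp mul e z.
Proof.
  intros [Hc [Hg1 [Hg2 [y [Hy1 [Hy2 [Hy3 Hy4]]]]]]] Hez. unfold pw in *.
  set (g := spow mul z (l - 1)) in *.
  split. exact Hez. split. rewrite (Hc e). exact Hez.
  set (w := mul (spow mul z (l - 1 + (l - 1))) (mul y y)).
  assert (Hzw : mul z w = e).
  { unfold w. rewrite mulA.
    change (mul z (spow mul z (l - 1 + (l - 1)))) with (spow mul z (S (l - 1 + (l - 1)))).
    rewrite spow_add by auto. fold g.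
    rewrite <- (mulA g g (mul y y)), (mulA g y y), Hy3, Hy1, Hy3. reflexivity. }
  exists w. split.
  - unfold w. rewrite mulA. rewrite (ef_spow_of mul mulA e z _ Hez). reflexivity.
  - split. unfold w. rewrite <- mulA, <- (mulA y y e), Hy2. reflexivity.
    split. exact Hzw. rewrite <- (Hc w). exact Hzw.
Qed.

Lemma absorb {T} (mul : T->T->T) (mulA : forall x y z, mul x (mul y z) = mul (mul x y) z) e
  l a c w : center mul a -> Zn mul e l c -> a = mul a (mul c w) -> ef mul e a.
Proof.
  intros Ha [Hc [Eg _]] Heq.
  assert (Hn : forall n, a = mul a (spow mul (mul c w) n)).
  { induction n as [|n IH]. exact Heq.
    change (spow mul (mul c w) (S n)) with (mul (mul c w) (spow mul (mul c w) n)).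
    rewrite mulA, <- Heq. exact IH. }
  specialize (Hn (l - 1)). rewrite spow_mul_c in Hn by auto. unfold pw in Eg.
  unfold ef.
  assert (E1 : mul e a = mul e (mul a (mul (spow mul c (l - 1)) (spow mul w (l - 1))))).
  { rewrite <- Hn. reflexivity. }
  rewrite E1, mulA, <- (Ha e), <- (mulA a e _), (mulA e _ _), Eg. symmetry. exact Hn.
Qed.
Definition Concl {T} (mul : T -> T -> T) e l : Prop :=
  exists (F' : T -> Prop) (A' : T -> Prop),
    (exists f1 f2 : T, forall x, F' x -> x = f1 \/ x = f2) /\
    infinite_set A' /\
    (forall a, A' a -> Zn mul e l a) /\
    (forall a b, A' a -> A' b -> F' (mul a b) \/ Hgrp mul e (mul a b)) /\
    (forall a, A' a -> ~ FX1 mul F' a).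

Lemma direct {T} (mul : T->T->T) (mulA : forall x y z, mul x (mul y z) = mul (mul x y) z) e
  (he : idempotent mul e) l (hl : 1 <= l) (A : T -> Prop) :
  infinite_set A -> (forall a, A a -> Zn mul e l a) ->
  (forall a b, A a -> A b -> ef mul e (mul a b)) -> Concl mul e l.
Proof.
  intros HA HZ Hef. exists (fun _ => False), A. split; [exists e, e; intros _ []|].
  split; auto. split; auto. split.
  - intros a b Ha Hb. right. apply EH with l; auto. apply Zn_mul; auto.
  - intros a _ [[]|[f [x [[] _]]]].
Qed.

Definition stepP {T} (mul : T->T->T) (C : T -> Prop) (p : T * T * (T -> Prop)) : Prop :=
  C (fst (fst p)) /\ infinite_set (snd p) /\
  (forall c, snd p c -> C c /\ c <> fst (fst p) /\ mul (fst (fst p)) c = snd (fst p)).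
Definition stepF {T} (mul : T->T->T) (t0 : T) C := epsilon (inhabits (t0, t0, C)) (stepP mul C).
Fixpoint cs {T} (mul : T->T->T) t0 (D : T -> Prop) n : T -> Prop :=
  match n with 0 => D | S k => snd (stepF mul t0 (cs mul t0 D k)) end.
Definition bb {T} (mul : T->T->T) t0 D n := fst (fst (stepF mul t0 (cs mul t0 D n))).
Definition ff {T} (mul : T->T->T) t0 D n := snd (fst (stepF mul t0 (cs mul t0 D n))).

Lemma chain_props {T} (mul : T->T->T) t0 (D : T -> Prop) (HD : infinite_set D)
  (hfin : forall d0, D d0 -> finite_set (fun y => exists d, D d /\ y = mul d0 d)) :
  (forall n, D (bb mul t0 D n)) /\
  (forall i j, i < j -> mul (bb mul t0 D i) (bb mul t0 D j) = ff mul t0 D i /\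
                        bb mul t0 D j <> bb mul t0 D i).
Proof.
  assert (Hstep : forall C, infinite_set C -> (forall c, C c -> D c) -> stepP mul C (stepF mul t0 C)).
  { intros C HC HCD. unfold stepF. apply epsilon_spec.
    destruct (inf_nonempty C HC) as [b Hb]. destruct (hfin b (HCD b Hb)) as [L HL].
    destruct (pigeon (fun c => C c /\ c <> b) (mul b) L (inf_remove C b HC)) as [f Hf].
    { intros c [Hc _]. apply HL. eauto. }
    exists (b, f, fun c => (C c /\ c <> b) /\ mul b c = f). unfold stepP; simpl.
    split; auto. split; auto. intros c [[? ?] ?]; auto. }
  assert (Hinv : forall n, infinite_set (cs mul t0 D n) /\ forall c, cs mul t0 D n c -> D c).
  { induction n as [|n [H1 H2]]. simpl; split; auto.
    destruct (Hstep _ H1 H2) as [P1 [P2 P3]].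
    change (cs mul t0 D (S n)) with (snd (stepF mul t0 (cs mul t0 D n))).
    split; auto. intros c Hc. apply H2. apply (P3 c Hc). }
  assert (Hmono : forall k n c, cs mul t0 D (k + n) c -> cs mul t0 D n c).
  { induction k as [|k IH]; simpl; auto. intros n c Hc. apply IH.
    destruct (Hinv (k + n)) as [H1 H2]. destruct (Hstep _ H1 H2) as [_ [_ P3]]. apply (P3 c Hc). }
  split.
  - intros n. destruct (Hinv n) as [H1 H2]. destruct (Hstep _ H1 H2) as [P1 _]. apply H2, P1.
  - intros i j Hij. destruct (Hinv i) as [H1 H2]. destruct (Hstep _ H1 H2) as [_ [_ P3]].
    assert (Hjin : cs mul t0 D j (bb mul t0 D j)).
    { destruct (Hinv j) as [H1' H2']. destruct (Hstep _ H1' H2') as [P1 _]. exact P1. }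
    pose proof (Hmono (j - S i) (S i) (bb mul t0 D j)) as Hm.
    replace (j - S i + S i) with j in Hm by lia. apply Hm in Hjin.
    destruct (P3 _ Hjin) as [_ [Hne Heq]]. split; auto.
Qed.
Definition okk {T} (mul : T->T->T) e l k (C : T -> Prop) :=
  forall x y, C x -> C y -> exists t z, Zn mul e l t /\ ef mul e (spow mul t k) /\
    mul x y = mul t z /\ mul x x = mul t t.

Lemma core {T} (mul : T->T->T) (mulA : forall x y z, mul x (mul y z) = mul (mul x y) z) e
  (he : idempotent mul e) l (hl : 1 <= l) k (C : T -> Prop) :
  infinite_set C -> (forall c, C c -> Zn mul e l c) ->
  (forall c, C c -> ef mul e (spow mul (mul c c) k)) ->
  (forall C', infinite_set C' -> (forall c, C' c -> Zn mul e l c) -> okk mul e l k C' -> Concl mul e l) ->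
  Concl mul e l.
Proof.
  intros HC HZ Hk REC.
  set (Sq := fun x => exists c, C c /\ x = mul c c).
  destruct (classic (infinite_set Sq)) as [HSq|HSq].
  { apply (REC Sq HSq).
    - intros x [c [Hc ->]]. apply Zn_mul; auto.
    - intros x y [c [Hc ->]] [c' [Hc' ->]]. exists (mul c c), (mul c' c').
      split. apply Zn_mul; auto. split. auto. split; reflexivity. }
  unfold infinite_set in HSq. apply NNPP in HSq. destruct HSq as [L HL].
  destruct (pigeon C (fun c => mul c c) L HC) as [s HD].
  { intros c Hc. apply HL. exists c; auto. }
  set (D := fun c => C c /\ mul c c = s) in *.
  destruct (inf_nonempty D HD) as [d1 [Hd1 Hs1]].
  assert (Zs : Zn mul e l s) by (rewrite <- Hs1; apply Zn_mul; auto).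
  assert (Es : ef mul e (spow mul s k)) by (rewrite <- Hs1; auto).
  assert (Cs : center mul s) by (destruct Zs; auto).
  assert (ZD : forall d, D d -> Zn mul e l d) by (intros d [Hd _]; auto).
  assert (CD : forall d, D d -> center mul d) by (intros d Hd; destruct (ZD d Hd); auto).
  destruct (classic (exists d0, D d0 /\ infinite_set (fun y => exists d, D d /\ y = mul d0 d)))
    as [[d0 [Hd0 HE]]|Hn].
  { apply (REC _ HE).
    - intros x [d [Hd ->]]. apply Zn_mul; auto.
    - intros x y [d [Hd ->]] [d' [Hd' ->]]. exists s, (mul d d').
      split; auto. split; auto. split.
      + rewrite rearr by (auto; apply (CD d Hd)). destruct Hd0 as [_ ->]. reflexivity.
      + rewrite rearr by (auto; apply (CD d Hd)). destruct Hd0 as [_ ->]. destruct Hd as [_ ->].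
        reflexivity. }
  assert (hfin : forall d0, D d0 -> finite_set (fun y => exists d, D d /\ y = mul d0 d)).
  { intros d0 Hd0. apply NNPP. intro Hi. apply Hn. eauto. }
  destruct (chain_props mul s D HD hfin) as [Hb Hch].
  set (b := bb mul s D) in *. set (f := ff mul s D) in *.
  assert (Hbs : forall i, mul (b i) (b i) = s) by (intros i; destruct (Hb i); auto).
  assert (Hcb : forall i, center mul (b i)) by (intros i; apply CD; auto).
  assert (Hfi : forall i j, i < j -> f i = mul (b i) (b j)) by (intros i j H; symmetry; apply Hch; auto).
  set (V := fun y => exists i, y = f i).
  destruct (classic (infinite_set V)) as [HV|HV].
  { apply (REC V HV).
    - intros x [i ->]. rewrite (Hfi i (S i)) by lia. apply Zn_mul; auto.
    - intros x y [i ->] [j ->]. exists s, (mul (b i) (b j)).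
      split; auto. split; auto.
      rewrite (Hfi i (S (i + j))) by lia. rewrite (Hfi j (S (i + j))) by lia.
      split.
      + rewrite rearr by (auto; symmetry; apply Hcb). rewrite Hbs. symmetry; apply Cs.
      + rewrite rearr by (auto; symmetry; apply Hcb). rewrite !Hbs. reflexivity. }
  unfold infinite_set in HV. apply NNPP in HV. destruct HV as [LV HLV].
  destruct (pigeon (fun _ : nat => True) f LV nat_inf) as [f0 HS].
  { intros i _. apply HLV. exists i; auto. }
  set (SS := fun i : nat => True /\ f i = f0) in *.
  assert (Zf0 : Zn mul e l f0).
  { destruct (inf_nonempty _ HS) as [i [_ Hi]]. rewrite <- Hi, (Hfi i (S i)) by lia. apply Zn_mul; auto. }
  exists (fun x => (x = s /\ ~ Hgrp mul e s) \/ (x = f0 /\ ~ Hgrp mul e f0)),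
         (fun a => exists i, SS i /\ a = b i).
  split. { exists s, f0. intros x [[-> _]|[-> _]]; auto. }
  split. { apply inj_image; auto. intros i j Hij.
           destruct (Nat.lt_total i j) as [H|[H|H]]; auto; exfalso;
           destruct (Hch _ _ H); auto. }
  split. { intros a [i [_ ->]]. apply ZD; auto. }
  split.
  { intros a a' [i [Si ->]] [j [Sj ->]].
    assert (Hp : i = j \/ mul (b i) (b j) = f0).
    { destruct (Nat.lt_total i j) as [H|[H|H]]; auto.
      - right. rewrite <- (Hfi i j H). destruct Si; auto.
      - right. rewrite (Hcb i (b j)), <- (Hfi j i H). destruct Sj; auto. }
    destruct Hp as [<-|Hp].
    - rewrite Hbs. destruct (classic (Hgrp mul e s)); auto.
    - rewrite Hp. destruct (classic (Hgrp mul e f0)); auto. }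
  intros a [i [Si ->]] HF.
  destruct (inf_unbounded SS HS (S i)) as [j [Sj Hij]].
  assert (Hij' : mul (b i) (b j) = f0) by (rewrite <- (Hfi i j) by lia; destruct Si; auto).
  assert (Hbi : forall c w, Zn mul e l c -> b i = mul (b i) (mul c w) ->
                 Hgrp mul e s /\ Hgrp mul e f0).
  { intros c w Zc Heq.
    assert (Ebi : ef mul e (b i)) by (apply (absorb mul mulA e l (b i) c w); auto).
    split; apply EH with l; auto.
    - rewrite <- (Hbs i). apply ef_mul_l; auto.
    - rewrite <- Hij'. apply ef_mul_l; auto. }
  assert (Zi : Zn mul e l (b i)) by (apply ZD; auto).
  assert (Zj : Zn mul e l (b j)) by (apply ZD; auto).
  destruct HF as [[[E1 Hn1]|[E1 Hn1]]|[f' [x [[[E2 Hn2]|[E2 Hn2]] E3]]]].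
  - apply Hn1. apply (Hbi (b i) (b i)); auto.
    rewrite <- (Hbs i) in E1. rewrite <- E1. exact E1.
  - apply Hn1. apply (Hbi (b j) (b j)); auto.
    rewrite mulA, Hij', <- E1, Hij', <- E1. reflexivity.
  - apply Hn2. apply (Hbi (b i) x); auto.
    rewrite mulA, (Hbs i), <- E2. exact E3.
  - apply Hn2. apply (Hbi (b j) x); auto.
    rewrite mulA, Hij', <- E2. exact E3.
Qed.

Lemma gen {T} (mul : T->T->T) (mulA : forall x y z, mul x (mul y z) = mul (mul x y) z) e
  (he : idempotent mul e) l (hl : 1 <= l) k : forall (C : T -> Prop),
  infinite_set C -> (forall c, C c -> Zn mul e l c) ->
  (forall c, C c -> ef mul e (spow mul (mul c c) k)) -> Concl mul e l.
Proof.
  induction k as [|k IH]; intros C HC HZ Hk; apply (core mul mulA e he l hl _ C HC HZ Hk);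
    intros C' HC' HZ' Hok.
  - apply (direct mul mulA e he l hl C' HC' HZ'). intros x y Hx Hy.
    destruct (Hok x y Hx Hy) as [t [z [_ [Et [E _]]]]]. rewrite E. apply ef_mul_l; auto.
  - apply (IH C' HC' HZ'). intros x Hx.
    destruct (Hok x x Hx Hx) as [t [z [Zt [Et [_ E]]]]]. rewrite E.
    rewrite spow_sq by (auto; destruct Zt; auto).
    apply (ef_spow_mono mul mulA e t (S k)); auto. lia.
Qed.

Theorem mainTheorem18 (T : Type) (mul : T -> T -> T)
  (mulA : forall x y z : T, mul x (mul y z) = mul (mul x y) z)
  (hper : periodic mul)
  (e : T) (he : idempotent mul e)
  (l : nat) (hl : 1 <= l)
  (hinf : infinite_set (fun z => Zn mul e l z /\ ~ Hgrp mul e z)) :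
  exists (F' : T -> Prop) (A' : T -> Prop),
    (exists f1 f2 : T, forall x, F' x -> x = f1 \/ x = f2) /\
    infinite_set A' /\
    (forall a, A' a -> Zn mul e l a) /\
    (forall a b, A' a -> A' b -> F' (mul a b) \/ Hgrp mul e (mul a b)) /\
    (forall a, A' a -> ~ FX1 mul F' a).
Proof.
  apply (gen mul mulA e he l hl l _ hinf).
  - intros c [Hc _]. exact Hc.
  - intros c [[Hc [Hg _]] _]. rewrite spow_sq by auto. unfold pw in Hg.
    apply (ef_spow_mono mul mulA e c (l - 1)); auto. lia.
Qed.
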